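(* Let $T>0$, $L>0$, $\alpha\in\mathbb{R}\setminus\{0\}$, $n\ge2$ an integer, $x_0>L$, $0<t_0<T$, $\beta>0$, and $\psi(t,x)=(x-x_0)^2-\beta(t-t_0)^2$. Then there exist $\lambda_0>0$ and $C>0$ such that for all $\lambda>\lambda_0$ and all $v\in C_0^\infty((0,T)\times(0,L);\mathbb{R})$, $$\sum_{m=0}^{n-1}\int_0^T\!\!\int_0^L\lambda^{2n-2m-1}e^{2\lambda\psi}|\partial_x^m v|^2\,dx\,dt\le C\int_0^T\!\!\int_0^L e^{2\lambda\psi}\big|\alpha\partial_t v+\partial_x^n v\big|^2\,dx\,dt.$$ *)

(* Defs.v *)
From Stdlib Require Import Reals Lra Lia List.
From Coquelicot Require Import Coquelicot.
Open Scope R_scope.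

(* Iterated partial derivative along a list of directions:
   true = derivative in t (first variable), false = derivative in x (second).
   The head of the list is the last derivative applied. *)
Fixpoint pder (l : list bool) (f : R -> R -> R) : R -> R -> R :=
  match l with
  | nil => f
  | cons b l' =>
      let g := pder l' f in
      if b then (fun t x => Derive (fun s => g s x) t)
      else (fun t x => Derive (fun y => g t y) x)
  end.

Definition smooth2 (f : R -> R -> R) : Prop :=
  forall (l : list bool) (t x : R),
    ex_derive (fun s => pder l f s x) t /\
    ex_derive (fun y => pder l f t y) x /\
    continuity_2d_pt (pder l f) t x.

Definition C0inf_rect (T L : R) (v : R -> R -> R) : Prop :=
  smooth2 v /\
  exists a b c d : R,
    0 < a /\ a < b /\ b < T /\ 0 < c /\ c < d /\ d < L /\
    forall t x, ~ (a <= t <= b /\ c <= x <= d) -> v t x = 0.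

Definition dxn (m : nat) (v : R -> R -> R) : R -> R -> R :=
  fun t x => Derive_n (fun y => v t y) m x.

Definition dt (v : R -> R -> R) : R -> R -> R :=
  fun t x => Derive (fun s => v s x) t.

Definition int2 (T L : R) (f : R -> R -> R) : R :=
  RInt (fun t => RInt (fun x => f t x) 0 L) 0 T.

Definition psi (x0 t0 beta : R) (t x : R) : R :=
  (x - x0) ^ 2 - beta * (t - t0) ^ 2.

(* Main.v *)
Require Import Defs.
From Stdlib Require Import Reals Lra Lia List FunctionalExtensionality.
From Coquelicot Require Import Coquelicot.
Open Scope R_scope.


Definition Ct (f : R -> R) := forall x, continuous f x.

Lemma Ct_plus f g : Ct f -> Ct g -> Ct (fun x => f x + g x).
Proof. intros Hf Hg x. apply (continuous_plus f g); auto. Qed.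
Lemma Ct_mult f g : Ct f -> Ct g -> Ct (fun x => f x * g x).
Proof. intros Hf Hg x. apply (continuous_mult f g); auto. Qed.
Lemma Ct_opp f : Ct f -> Ct (fun x => - f x).
Proof. intros Hf x. apply (continuous_opp f); auto. Qed.
Lemma Ct_const c : Ct (fun _ => c).
Proof. intros x. apply continuous_const. Qed.
Lemma Ct_id : Ct (fun x => x).
Proof. intros x. apply continuous_id. Qed.
Lemma Ct_minus f g : Ct f -> Ct g -> Ct (fun x => f x - g x).
Proof. intros. apply Ct_plus; auto. apply Ct_opp; auto. Qed.
Lemma Ct_ext f g : (forall x, f x = g x) -> Ct f -> Ct g.
Proof. intros H Hf. replace g with f; auto. apply functional_extensionality; auto. Qed.
Lemma Ct_pow f n : Ct f -> Ct (fun x => f x ^ n).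
Proof. intros Hf. induction n; simpl. apply Ct_const. apply Ct_mult; auto. Qed.
Lemma Ct_exp f : Ct f -> Ct (fun x => exp (f x)).
Proof. intros Hf x. apply (continuous_comp f exp); auto.
 apply (ex_derive_continuous (K:=R_AbsRing) (V:=R_NormedModule) exp). eexists; apply is_derive_exp. Qed.

Lemma exR f a b : a <= b -> Ct f -> ex_RInt f a b.
Proof. intros _ H. apply (ex_RInt_continuous (V:=R_CompleteNormedModule)). intros; apply H. Qed.

Lemma RInt_plusR f g a b : ex_RInt f a b -> ex_RInt g a b ->
  RInt (fun x => f x + g x) a b = RInt f a b + RInt g a b.
Proof. intros. apply (RInt_plus f g); auto. Qed.
Lemma RInt_minusR f g a b : ex_RInt f a b -> ex_RInt g a b ->
  RInt (fun x => f x - g x) a b = RInt f a b - RInt g a b.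
Proof. intros. apply (RInt_minus f g); auto. Qed.
Lemma RInt_scalR f a b l : ex_RInt f a b ->
  RInt (fun x => l * f x) a b = l * RInt f a b.
Proof. intros. apply (RInt_scal f a b l); auto. Qed.
Lemma RInt_extR (f g : R -> R) a b : (forall x, f x = g x) -> RInt f a b = RInt g a b.
Proof. intros H. apply RInt_ext. intros; auto. Qed.
Lemma RInt_ge0 f a b : a <= b -> ex_RInt f a b -> (forall x, a <= x <= b -> 0 <= f x) -> 0 <= RInt f a b.
Proof. intros Hab Hf H.
 replace 0 with (RInt (fun _ : R => 0) a b) at 1.
 apply RInt_le; auto. apply ex_RInt_const. intros; apply H; lra.
 rewrite RInt_const. unfold scal; simpl; unfold mult; simpl; ring. Qed.
Lemma RInt_leR f g a b : a <= b -> ex_RInt f a b -> ex_RInt g a b ->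
  (forall x, a <= x <= b -> f x <= g x) -> RInt f a b <= RInt g a b.
Proof. intros. apply RInt_le; auto. intros; apply H2; lra. Qed.

Lemma is_derive_multR (f g : R -> R) x df dg : is_derive f x df -> is_derive g x dg ->
  is_derive (fun y => f y * g y) x (df * g x + f x * dg).
Proof. intros. apply (is_derive_mult f g); auto. intros; apply Rmult_comm. Qed.

Lemma FTC0 (F df : R -> R) a b : a <= b -> (forall x, is_derive F x (df x)) -> Ct df ->
  F a = 0 -> F b = 0 -> RInt df a b = 0.
Proof.
  intros Hab HF Hc Ha Hb. apply is_RInt_unique.
  replace 0 with (minus (F b) (F a)). apply (is_RInt_derive (V:=R_CompleteNormedModule)); intros; auto.
  rewrite Ha, Hb. unfold minus, plus, opp; simpl; ring.
Qed.

Lemma Derive_cor (f : R -> R) x : ex_derive f x -> is_derive f x (Derive f x).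
Proof. intros H. apply Derive_correct. exact H. Qed.
Lemma is_derive_eqv (f : R -> R) (x l1 l2 : R) : l1 = l2 -> is_derive f x l1 -> is_derive f x l2.
Proof. intros ->; auto. Qed.


Record prm := mkP { pl : R; px0 : R; pt0 : R; pb : R; pt : R; pL : R; pc : R; pd : R }.
Definition good (p : prm) : Prop :=
  0 < pc p /\ pc p < pd p /\ pd p < pL p /\ pL p < px0 p /\ 0 < pl p.

Definition rw (p : prm) x := exp (2 * pl p * psi (px0 p) (pt0 p) (pb p) (pt p) x).
Definition ap (p : prm) x := pl p * (2 * (x - px0 p)).
Definition Eop (p : prm) (g : R -> R) x := - Derive g x - 2 * ap p x * g x.
Definition ip (p : prm) (g h : R -> R) := RInt (fun x => rw p x * (g x * h x)) 0 (pL p).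
Definition Cls (p : prm) (g : R -> R) :=
  (forall k x, ex_derive (Derive_n g k) x) /\ (forall x, ~ (pc p <= x <= pd p) -> g x = 0).

Lemma rw_deriv p x : is_derive (rw p) x (2 * ap p x * rw p x).
Proof. unfold rw, ap, psi. auto_derive. auto. match goal with |- _ * exp ?A = _ * exp ?B => replace A with B by ring end. ring. Qed.
Lemma rw_pos p x : 0 < rw p x.
Proof. apply exp_pos. Qed.
Lemma Ct_rw p : Ct (rw p).
Proof. intro x. apply (ex_derive_continuous (K:=R_AbsRing) (V:=R_NormedModule)). eexists; apply rw_deriv. Qed.
Lemma Ct_ap p : Ct (ap p).
Proof. unfold ap. apply Ct_mult. apply Ct_const. apply Ct_mult. apply Ct_const. apply Ct_minus. apply Ct_id. apply Ct_const. Qed.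

Ltac ctac := lazymatch goal with
 | |- Ct (fun _ => ?c) => apply Ct_const
 | |- Ct (fun x => x) => apply Ct_id
 | |- Ct (rw _) => apply Ct_rw
 | |- Ct (ap _) => apply Ct_ap
 | |- Ct (fun x => rw ?p x) => apply Ct_rw
 | |- Ct (fun x => ap ?p x) => apply Ct_ap
 | |- Ct (fun x => @?f x + @?g x) => apply (Ct_plus f g); ctac
 | |- Ct (fun x => @?f x - @?g x) => apply (Ct_minus f g); ctac
 | |- Ct (fun x => @?f x * @?g x) => apply (Ct_mult f g); ctac
 | |- Ct (fun x => - @?f x) => apply (Ct_opp f); ctac
 | |- Ct (fun x => @?f x ^ ?n) => apply (Ct_pow f n); ctac
 | |- _ => try assumption
 end.

Lemma Cls_exd p g : Cls p g -> forall x, ex_derive g x.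
Proof. intros [H _] x. apply (H 0%nat x). Qed.
Lemma Cls_ct p g : Cls p g -> Ct g.
Proof. intros H x. apply (ex_derive_continuous (K:=R_AbsRing) (V:=R_NormedModule)). apply (Cls_exd p g H). Qed.
Lemma Cls_ctD p g : Cls p g -> Ct (Derive g).
Proof. intros [H _] x. apply (ex_derive_continuous (K:=R_AbsRing) (V:=R_NormedModule)). apply (H 1%nat x). Qed.

Lemma supp_D p f : (forall x, ~ (pc p <= x <= pd p) -> f x = 0) ->
  forall x, ~ (pc p <= x <= pd p) -> Derive f x = 0.
Proof.
  intros Hf x Hx. rewrite <- (Derive_const 0 x). apply Derive_ext_loc.
  destruct (Rlt_or_le x (pc p)) as [H1|H1].
  - assert (He : 0 < pc p - x) by lra. exists (mkposreal _ He). intros y Hy.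
    apply Hf. unfold ball in Hy; simpl in Hy; unfold AbsRing_ball, abs, minus, plus, opp in Hy; simpl in Hy.
    apply Rabs_def2 in Hy. simpl in Hy. lra.
  - assert (H2 : pd p < x) by (destruct (Rle_dec x (pd p)); [exfalso; apply Hx; lra| lra]).
    assert (He : 0 < x - pd p) by lra. exists (mkposreal _ He). intros y Hy.
    apply Hf. unfold ball in Hy; simpl in Hy; unfold AbsRing_ball, abs, minus, plus, opp in Hy; simpl in Hy.
    apply Rabs_def2 in Hy. simpl in Hy. lra.
Qed.

Lemma Cls_Dn p g k : Cls p g -> Cls p (Derive_n g k).
Proof.
  intros [H1 H2]. split.
  - intros m x. assert (E : Derive_n (Derive_n g k) m = Derive_n g (m + k)).
    { apply functional_extensionality; intro; apply Derive_n_comp. }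
    rewrite E. apply H1.
  - induction k; simpl. exact H2. apply supp_D. exact IHk.
Qed.

Lemma Dn_E p g k : Cls p g -> forall x, Derive_n (Eop p g) k x =
  - Derive_n g (S k) x - 2 * ap p x * Derive_n g k x - 4 * pl p * INR k * Derive_n g (pred k) x.
Proof.
  intros [Hg _]. induction k; intro x.
  - simpl. unfold Eop. change (fun y : R => g y) with g. ring.
  - change (Derive_n (Eop p g) (S k) x) with (Derive (Derive_n (Eop p g) k) x).
    rewrite (Derive_ext _ _ x IHk). apply is_derive_unique. unfold ap. auto_derive.
    + split; [apply (Hg (S k))|]. split; [apply (Hg k)|]. split; [apply (Hg (pred k))|exact I].
    + change (Derive (fun x0 : R => Derive (Derive_n g k) x0) x) with (Derive_n g (S (S k)) x).
      change (Derive (fun x0 : R => Derive_n g k x0) x) with (Derive_n g (S k) x).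
      change (Derive (fun x0 : R => Derive_n g (pred k) x0) x) with (Derive_n g (S (pred k)) x).
      rewrite S_INR. destruct k as [|k]; cbn [Nat.pred]. change (INR 0) with 0. ring. ring.
Qed.

Lemma Cls_E p g : Cls p g -> Cls p (Eop p g).
Proof.
  intros Hc. pose proof Hc as [Hg Hs]. split.
  - intros k x. assert (E : Derive_n (Eop p g) k = fun y =>
      - Derive_n g (S k) y - 2 * ap p y * Derive_n g k y - 4 * pl p * INR k * Derive_n g (pred k) y).
    { apply functional_extensionality; intro y; apply Dn_E; auto. }
    rewrite E. unfold ap. auto_derive.
    split; [apply (Hg (S k))|]. split; [apply (Hg k)|]. split; [apply (Hg (pred k))|exact I].
  - intros x Hx. unfold Eop. rewrite (supp_D p g Hs x Hx), (Hs x Hx). ring.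
Qed.

Lemma Ct_E p g : Cls p g -> Ct (Eop p g).
Proof. intros H. unfold Eop. apply Ct_minus. apply Ct_opp. apply (Cls_ctD p g H).
  apply Ct_mult. apply Ct_mult. apply Ct_const. apply Ct_ap. apply (Cls_ct p g H). Qed.

Lemma IBP p g h : good p -> Cls p g -> Cls p h -> ip p (Derive g) h = ip p g (Eop p h).
Proof.
  intros Hp Hg Hh. unfold good in Hp.
  assert (Z : RInt (fun x => rw p x * (Derive g x * h x) - rw p x * (g x * Eop p h x)) 0 (pL p) = 0).
  { apply (FTC0 (fun x => rw p x * (g x * h x))); try lra.
    - intro x. eapply is_derive_eqv.
      2:{ apply is_derive_multR. apply rw_deriv. apply is_derive_multR; apply Derive_cor.
          apply (Cls_exd p g Hg). apply (Cls_exd p h Hh). }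
      cbv beta. unfold Eop. ring.
    - apply Ct_minus; apply Ct_mult.
      apply Ct_rw. apply Ct_mult. apply (Cls_ctD p g Hg). apply (Cls_ct p h Hh).
      apply Ct_rw. apply Ct_mult. apply (Cls_ct p g Hg). apply (Ct_E p h Hh).
    - destruct Hg as [_ Hs]. rewrite (Hs 0). ring. lra.
    - destruct Hg as [_ Hs]. rewrite (Hs (pL p)). ring. lra. }
  unfold good in Hp. rewrite RInt_minusR in Z. unfold ip. lra.
  apply exR. lra. apply Ct_mult. apply Ct_rw. apply Ct_mult. apply (Cls_ctD p g Hg). apply (Cls_ct p h Hh).
  apply exR. lra. apply Ct_mult. apply Ct_rw. apply Ct_mult. apply (Cls_ct p g Hg). apply (Ct_E p h Hh).
Qed.

Lemma Cls_D p g : Cls p g -> Cls p (Derive g).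
Proof. intros H. exact (Cls_Dn p g 1 H). Qed.

Lemma E_D p y : Cls p y -> forall x, Eop p (Derive y) x = Derive (Eop p y) x + 4 * pl p * y x.
Proof. intros H x. pose proof (Dn_E p y 1 H x) as E1.
  change (Derive (Eop p y) x) with (Derive_n (Eop p y) 1 x). rewrite E1.
  change (INR 1) with 1. cbn [Nat.pred]. unfold Eop.
  change (Derive_n y 2 x) with (Derive (Derive y) x).
  change (Derive_n y 1 x) with (Derive y x). change (Derive_n y 0 x) with (y x). ring. Qed.

Lemma ip_sym p g h : ip p g h = ip p h g.
Proof. unfold ip. apply RInt_extR. intro; ring. Qed.
Lemma ip_ext p g h h' : (forall x, h x = h' x) -> ip p g h = ip p g h'.
Proof. intros H. unfold ip. apply RInt_extR. intro; rewrite H; ring. Qed.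
Lemma ip_ext_l p g g' h : (forall x, g x = g' x) -> ip p g h = ip p g' h.
Proof. intros H. unfold ip. apply RInt_extR. intro; rewrite H; ring. Qed.

Lemma ex_ip p g h : good p -> Ct g -> Ct h -> ex_RInt (fun x => rw p x * (g x * h x)) 0 (pL p).
Proof. intros Hp Hg Hh. unfold good in Hp. apply exR. lra. apply Ct_mult. apply Ct_rw. apply Ct_mult; auto. Qed.

Lemma ip_plus p g h1 h2 : good p -> Ct g -> Ct h1 -> Ct h2 ->
  ip p g (fun x => h1 x + h2 x) = ip p g h1 + ip p g h2.
Proof. intros. unfold ip. rewrite <- RInt_plusR; try apply ex_ip; auto.
  apply RInt_extR. intro; ring. Qed.
Lemma ip_minus p g h1 h2 : good p -> Ct g -> Ct h1 -> Ct h2 ->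
  ip p g (fun x => h1 x - h2 x) = ip p g h1 - ip p g h2.
Proof. intros. unfold ip. rewrite <- RInt_minusR; try apply ex_ip; auto.
  apply RInt_extR. intro; ring. Qed.
Lemma ip_scal p g h k : good p -> Ct g -> Ct h ->
  ip p g (fun x => k * h x) = k * ip p g h.
Proof. intros. unfold ip. rewrite <- RInt_scalR; try apply ex_ip; auto.
  apply RInt_extR. intro; ring. Qed.
Lemma ip_nonneg p g : good p -> Ct g -> 0 <= ip p g g.
Proof. intros Hp Hg. pose proof Hp as Hp'. unfold good in Hp'. apply RInt_ge0. lra. apply ex_ip; auto.
  intros x _. apply Rmult_le_pos. left; apply rw_pos. nra. Qed.

Definition Nm p g := ip p g g.

Lemma L1 p y : good p -> Cls p y -> Nm p (Derive y) = Nm p (Eop p y) + 4 * pl p * Nm p y.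
Proof.
  intros Hp Hy. unfold Nm.
  rewrite IBP; auto; [|apply Cls_D; auto].
  rewrite (ip_ext p y _ _ (E_D p y Hy)).
  rewrite ip_plus; auto.
  2: apply (Cls_ct p y Hy). 2: apply (Cls_ctD p _ (Cls_E p y Hy)).
  2: apply Ct_mult; [apply Ct_const| apply (Cls_ct p y Hy)].
  rewrite ip_scal; auto. 2,3: apply (Cls_ct p y Hy).
  rewrite ip_sym, IBP; auto. apply Cls_E; auto.
Qed.

Lemma L4 p g : good p -> Cls p g ->
  4 * pl p ^ 2 * (px0 p - pL p) ^ 2 * Nm p g <= Nm p (Derive g).
Proof.
  intros Hp Hg. pose proof Hp as Hp'. unfold good in Hp'.
  pose proof (Cls_ct p g Hg) as Cg. pose proof (Cls_ctD p g Hg) as Cd.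
  set (A := fun x => rw p x * ((Derive g x + ap p x * g x) ^ 2) + rw p x * (ap p x ^ 2 * g x ^ 2)
                     + 2 * pl p * (rw p x * g x ^ 2)).
  set (dF := fun x => 2 * ap p x * rw p x * (ap p x * g x ^ 2) + rw p x * ((2 * pl p) * g x ^ 2
                       + ap p x * (2 * g x * Derive g x))).
  assert (CA : Ct A). { unfold A. ctac. }
  assert (CdF : Ct dF). { unfold dF. ctac. }
  assert (Z : RInt dF 0 (pL p) = 0).
  { apply (FTC0 (fun x => rw p x * (ap p x * g x ^ 2))); auto; try lra.
    - intro x.
      assert (Da : is_derive (ap p) x (2 * pl p)). { unfold ap. auto_derive. auto. ring. }
      assert (Dg2 : is_derive (fun y => g y ^ 2) x (2 * g x * Derive g x)).
      { eapply is_derive_eqv. 2:{ apply (is_derive_ext (fun y => g y * g y)). intro; simpl; ring.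
          apply is_derive_multR; apply Derive_cor; apply (Cls_exd p g Hg). } ring. }
      eapply is_derive_eqv.
      2:{ apply is_derive_multR. apply rw_deriv. apply is_derive_multR. apply Da. apply Dg2. }
      unfold dF. simpl. ring.
    - destruct Hg as [_ Hs]. rewrite (Hs 0). ring. lra.
    - destruct Hg as [_ Hs]. rewrite (Hs (pL p)). ring. lra. }
  assert (E : Nm p (Derive g) = RInt A 0 (pL p)).
  { unfold Nm, ip. replace (RInt A 0 (pL p)) with (RInt A 0 (pL p) - RInt dF 0 (pL p)) by lra.
    rewrite <- RInt_minusR. apply RInt_extR. intro x. unfold A, dF. ring.
    apply exR; auto; lra. apply exR; auto; lra. }
  rewrite E. unfold Nm, ip. rewrite <- RInt_scalR. apply RInt_leR. lra.
  apply exR. lra. apply Ct_mult. apply Ct_const. apply Ct_mult. apply Ct_rw. apply Ct_mult; auto.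
  apply exR; auto; lra.
  intros x Hx. unfold A. pose proof (rw_pos p x).
  assert (H1 : (px0 p - pL p) ^ 2 <= (x - px0 p) ^ 2) by nra.
  assert (H2 : 4 * pl p ^ 2 * (px0 p - pL p) ^ 2 <= ap p x ^ 2). { unfold ap. nra. }
  assert (0 <= rw p x * (Derive g x + ap p x * g x) ^ 2) by (apply Rmult_le_pos; [lra| apply pow2_ge_0]).
  assert (0 <= 2 * pl p * (rw p x * g x ^ 2)) by (apply Rmult_le_pos; [lra| apply Rmult_le_pos; [lra|apply pow2_ge_0]]).
  assert (rw p x * (4 * pl p ^ 2 * (px0 p - pL p) ^ 2 * g x ^ 2) <= rw p x * (ap p x ^ 2 * g x ^ 2)).
  { apply Rmult_le_compat_l. lra. apply Rmult_le_compat_r; [apply pow2_ge_0| lra]. }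
  nra.
  apply ex_ip; auto.
Qed.

Fixpoint Epow (p : prm) (j : nat) (g : R -> R) : R -> R :=
  match j with O => g | S j' => Epow p j' (Eop p g) end.

Lemma Cls_Epow p j g : Cls p g -> Cls p (Epow p j g).
Proof. revert g; induction j; intros g H; simpl; auto. apply IHj. apply Cls_E; auto. Qed.

Lemma Nm_minus_scal p u v k : good p -> Ct u -> Ct v ->
  Nm p (fun t => u t - k * v t) = Nm p u - 2 * k * ip p u v + k ^ 2 * Nm p v.
Proof.
  intros Hp Cu Cv. unfold Nm, ip.
  rewrite <- (RInt_scalR (fun x => rw p x * (u x * v x))), <- (RInt_scalR (fun x => rw p x * (v x * v x))).
  rewrite <- RInt_minusR, <- RInt_plusR. apply RInt_extR. intro; ring.
  all: apply exR; [unfold good in Hp; lra| ctac].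
Qed.

Lemma Tk p z k : good p -> Cls p z -> INR k * (4 * pl p) <= 8 * pl p ^ 2 * (px0 p - pL p) ^ 2 ->
  4 * pl p * Nm p (Derive_n z k) <= Nm p (Derive_n z (S k)) - Nm p (Derive_n (Eop p z) k).
Proof.
  intros Hp Hz Hk. pose proof Hp as Hp'. unfold good in Hp'. destruct k as [|j].
  - change (Nm p (Derive_n z 1)) with (Nm p (Derive z)). rewrite L1; auto.
    change (Nm p (Derive_n (Eop p z) 0)) with (Nm p (Eop p z)).
    change (Nm p (Derive_n z 0)) with (Nm p z). lra.
  - set (x := Derive_n z j). set (y := Derive_n z (S j)).
    assert (Cx : Cls p x) by (apply Cls_Dn; auto).
    assert (Cy : Cls p y) by (apply Cls_Dn; auto).
    change (Nm p (Derive_n z (S (S j)))) with (Nm p (Derive y)). rewrite L1; auto.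
    assert (E : Nm p (Derive_n (Eop p z) (S j)) = Nm p (fun t => Eop p y t - (4 * pl p * INR (S j)) * x t)).
    { unfold Nm. rewrite (ip_ext p _ _ (fun t => Eop p y t - (4 * pl p * INR (S j)) * x t)).
      apply ip_ext_l.
      all: intro t; rewrite Dn_E; auto; unfold Eop, y, x; cbn [Nat.pred]; reflexivity. }
    rewrite E, Nm_minus_scal; auto. 2: apply Ct_E; auto. 2: apply (Cls_ct p x Cx).
    assert (I : ip p (Eop p y) x = Nm p y).
    { rewrite ip_sym, <- IBP; auto. }
    rewrite I. pose proof (L4 p x Hp Cx) as H4.
    change (Nm p (Derive x)) with (Nm p y) in H4.
    pose proof (ip_nonneg p x Hp (Cls_ct p x Cx)) as Nx. fold (Nm p x) in Nx.
    set (kk := INR (S j)) in *. assert (0 <= kk) by (apply pos_INR).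
    assert (kk * (4 * pl p) * Nm p x <= 8 * pl p ^ 2 * (px0 p - pL p) ^ 2 * Nm p x)
      by (apply Rmult_le_compat_r; auto).
    assert (0 <= 4 * pl p * kk) by nra.
    assert (0 <= (4 * pl p * kk) * (2 * Nm p y - 4 * pl p * kk * Nm p x)) by (apply Rmult_le_pos; nra).
    nra.
Qed.

Lemma Qj p n j z : good p -> Cls p z -> INR n * (4 * pl p) <= 8 * pl p ^ 2 * (px0 p - pL p) ^ 2 ->
  (j <= n)%nat -> Nm p (Epow p j z) <= Nm p (Derive_n z j).
Proof.
  intros Hp Hz Hn. revert z Hz. induction j; intros z Hz Hj.
  - simpl. unfold Nm. apply Req_le. reflexivity.
  - change (Epow p (S j) z) with (Epow p j (Eop p z)). eapply Rle_trans. apply IHj. apply Cls_E; auto. lia.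
    pose proof (Tk p z j Hp Hz) as T.
    assert (INR j * (4 * pl p) <= 8 * pl p ^ 2 * (px0 p - pL p) ^ 2).
    { eapply Rle_trans; [|apply Hn]. apply Rmult_le_compat_r. unfold good in Hp; lra.
      apply le_INR; lia. }
    specialize (T H).
    pose proof (ip_nonneg p (Derive_n z j) Hp (Cls_ct p _ (Cls_Dn p z j Hz))).
    unfold good in Hp. fold (Nm p (Derive_n z j)) in H0.
    assert (0 <= 4 * pl p * Nm p (Derive_n z j)) by (apply Rmult_le_pos; lra).
    lra.
Qed.

Lemma P1 p n g : good p -> Cls p g -> INR n * (4 * pl p) <= 8 * pl p ^ 2 * (px0 p - pL p) ^ 2 ->
  (1 <= n)%nat -> 4 * pl p * Nm p (Derive_n g (n - 1)) <= Nm p (Derive_n g n) - Nm p (Epow p n g).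
Proof.
  intros Hp Hg Hn H1. destruct n as [|n']. lia. replace (S n' - 1)%nat with n' by lia.
  pose proof (Tk p g n' Hp Hg) as T.
  assert (INR n' * (4 * pl p) <= 8 * pl p ^ 2 * (px0 p - pL p) ^ 2).
  { eapply Rle_trans; [|apply Hn]. apply Rmult_le_compat_r. unfold good in Hp; lra.
    apply le_INR; lia. }
  specialize (T H). pose proof (Qj p (S n') n' (Eop p g) Hp (Cls_E p g Hg) Hn) as Q.
  simpl Epow. assert (Nm p (Epow p n' (Eop p g)) <= Nm p (Derive_n (Eop p g) n')) by (apply Q; lia).
  lra.
Qed.

Lemma chain p g m j : good p -> Cls p g ->
  (4 * pl p ^ 2 * (px0 p - pL p) ^ 2) ^ j * Nm p (Derive_n g m) <= Nm p (Derive_n g (m + j)).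
Proof.
  intros Hp Hg. induction j.
  - simpl. rewrite Nat.add_0_r. lra.
  - replace (m + S j)%nat with (S (m + j)) by lia.
    pose proof (L4 p (Derive_n g (m + j)) Hp (Cls_Dn p g _ Hg)) as H4.
    change (Nm p (Derive (Derive_n g (m + j)))) with (Nm p (Derive_n g (S (m + j)))) in H4.
    simpl pow. assert (0 <= 4 * pl p ^ 2 * (px0 p - pL p) ^ 2).
    { apply Rmult_le_pos. apply Rmult_le_pos. lra. apply pow2_ge_0. apply pow2_ge_0. }
    rewrite Rmult_assoc. eapply Rle_trans; [|apply H4].
    apply Rmult_le_compat_l; auto.
Qed.


Lemma sum_le_const (f : nat -> R) N B : (forall m, (m <= N)%nat -> f m <= B) -> sum_f_R0 f N <= INR (S N) * B.
Proof.
  induction N; intros H.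
  - simpl. specialize (H 0%nat (le_n 0)). lra.
  - simpl sum_f_R0. rewrite S_INR. specialize (IHN (fun m Hm => H m ltac:(lia))).
    specialize (H (S N) ltac:(lia)). lra.
Qed.

Lemma sum_term_le (f : nat -> R) N : (forall m, (m <= N)%nat -> 0 <= f m) -> f 0%nat <= sum_f_R0 f N.
Proof.
  induction N; intros H. simpl; lra. simpl sum_f_R0.
  specialize (IHN (fun m Hm => H m ltac:(lia))). specialize (H (S N) ltac:(lia)). lra.
Qed.

Definition K1 p := / (4 * (px0 p - pL p) ^ 2) + 1.

Lemma term_bound p g n m : good p -> Cls p g -> (1 <= n)%nat -> (m <= n - 1)%nat ->
  pl p ^ (2 * n - 2 * m - 1) * Nm p (Derive_n g m) <= pl p * K1 p ^ n * Nm p (Derive_n g (n - 1)).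
Proof.
  intros Hp Hg Hn Hm. pose proof Hp as Hp'. unfold good in Hp'.
  set (j := (n - 1 - m)%nat).
  assert (E1 : (2 * n - 2 * m - 1 = S (2 * j))%nat) by (unfold j; lia).
  rewrite E1. change (pl p ^ S (2 * j)) with (pl p * pl p ^ (2 * j)). rewrite pow_mult. rewrite Rmult_assoc. rewrite (Rmult_assoc (pl p)).
  apply Rmult_le_compat_l. lra.
  pose proof (chain p g m j Hp Hg) as Hc. replace (m + j)%nat with (n - 1)%nat in Hc by (unfold j; lia).
  set (d2 := 4 * (px0 p - pL p) ^ 2) in *.
  assert (Hd : 0 < d2) by (unfold d2; apply Rmult_lt_0_compat; [lra| apply pow_lt; lra]).
  replace (4 * pl p ^ 2 * (px0 p - pL p) ^ 2) with (d2 * pl p ^ 2) in Hc by (unfold d2; ring).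
  rewrite Rpow_mult_distr in Hc.
  set (N0 := Nm p (Derive_n g m)) in *. set (N1 := Nm p (Derive_n g (n - 1))) in *.
  assert (HN1 : 0 <= N1) by (apply ip_nonneg; auto; apply (Cls_ct p _ (Cls_Dn p g _ Hg))).
  assert (HN0 : 0 <= N0) by (apply ip_nonneg; auto; apply (Cls_ct p _ (Cls_Dn p g _ Hg))).
  assert (Hdj : 0 < d2 ^ j) by (apply pow_lt; auto).
  assert (H2 : (pl p ^ 2) ^ j * N0 <= (/ d2) ^ j * N1).
  { rewrite pow_inv. apply (Rmult_le_reg_l (d2 ^ j)); auto.
    rewrite <- (Rmult_assoc (d2 ^ j) (/ d2 ^ j)). rewrite Rinv_r. rewrite Rmult_1_l. 2: lra. rewrite <- Rmult_assoc. exact Hc. }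
  eapply Rle_trans. exact H2. apply Rmult_le_compat_r; auto.
  unfold K1. fold d2. apply Rle_trans with ((/ d2 + 1) ^ j).
  apply pow_incr. split. left; apply Rinv_0_lt_compat; auto. lra.
  apply Rle_pow. assert (0 < / d2) by (apply Rinv_0_lt_compat; auto). lra. unfold j; lia.
Qed.

Lemma sum_bound p g n : good p -> Cls p g -> (1 <= n)%nat ->
  sum_f_R0 (fun m => pl p ^ (2 * n - 2 * m - 1) * Nm p (Derive_n g m)) (n - 1)
  <= INR n * (pl p * K1 p ^ n * Nm p (Derive_n g (n - 1))).
Proof.
  intros Hp Hg Hn. replace (INR n) with (INR (S (n - 1))) by (f_equal; lia).
  apply sum_le_const. intros m Hm. apply term_bound; auto.
Qed.

Lemma ipE p j g h : good p -> Cls p g -> Cls p h -> ip p (Epow p j g) h = ip p g (Derive_n h j).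
Proof.
  intros Hp. revert g. induction j; intros g Hg Hh.
  - simpl. apply ip_ext. intro; reflexivity.
  - simpl. rewrite IHj; auto. 2: apply Cls_E; auto.
    rewrite ip_sym. rewrite <- IBP; auto. 2: apply Cls_Dn; auto.
    rewrite ip_sym. apply ip_ext. intro; reflexivity.
Qed.

Fixpoint lcomb (l : list (R * (R -> R))) (x : R) : R :=
  match l with nil => 0 | (c, f) :: l' => c * f x + lcomb l' x end.
Fixpoint lcombI (l : list (R * (R -> R))) (a b : R) : R :=
  match l with nil => 0 | (c, f) :: l' => c * RInt f a b + lcombI l' a b end.

Lemma ex_lc (l : list (R * (R -> R))) a b : List.Forall (fun cf => ex_RInt (snd cf) a b) l -> ex_RInt (lcomb l) a b.
Proof.
  induction l as [|[c f] l IH]; intros H; simpl.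
  - apply ex_RInt_const.
  - inversion H; subst. apply (ex_RInt_plus (V:=R_NormedModule) (fun x => c * f x)).
    apply (ex_RInt_scal (V:=R_NormedModule) f a b c). auto. auto.
Qed.

Lemma RInt_lc (l : list (R * (R -> R))) a b : List.Forall (fun cf => ex_RInt (snd cf) a b) l -> RInt (lcomb l) a b = lcombI l a b.
Proof.
  induction l as [|[c f] l IH]; intros H; simpl.
  - rewrite RInt_const. unfold scal; simpl; unfold mult; simpl; ring.
  - inversion H; subst. simpl in H2.
    rewrite (RInt_plusR (fun x => c * f x) (lcomb l)). rewrite RInt_scalR; auto. rewrite IH; auto.
    apply (ex_RInt_scal (V:=R_NormedModule) f a b c). auto. apply ex_lc; auto.
Qed.

Ltac exs Hp := repeat (apply List.Forall_cons; [simpl; apply exR; [unfold good in Hp; lra | ctac] | ]); apply List.Forall_nil.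

Lemma per_t p n g h (al q A' : R) : good p -> Cls p g -> Cls p h -> (2 <= n)%nat ->
  INR n * (4 * pl p) <= 8 * pl p ^ 2 * (px0 p - pL p) ^ 2 ->
  A' = / (INR n * K1 p ^ n) ->
  al ^ 2 * q ^ 2 <= A' * pl p ^ (2 * n - 1) ->
  A' * sum_f_R0 (fun m => pl p ^ (2 * n - 2 * m - 1) * Nm p (Derive_n g m)) (n - 1)
   + al * RInt (fun x => rw p x * (h x * Derive_n g n x + 2 * q * (g x * Derive_n g n x)
                                   + g x * Derive_n h n x)) 0 (pL p)
  <= RInt (fun x => rw p x * (al * h x + Derive_n g n x) ^ 2) 0 (pL p).
Proof.
  intros Hp Hg Hh Hn Hl HA Hq. pose proof Hp as Hp'. unfold good in Hp'.
  set (Y := Derive_n g n). set (Z := Epow p n g). set (Hn' := Derive_n h n).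
  assert (CY : Ct Y) by (apply (Cls_ct p _ (Cls_Dn p g n Hg))).
  assert (CZ : Ct Z) by (apply (Cls_ct p _ (Cls_Epow p n g Hg))).
  assert (CH : Ct Hn') by (apply (Cls_ct p _ (Cls_Dn p h n Hh))).
  pose proof (Cls_ct p g Hg) as Cg. pose proof (Cls_ct p h Hh) as Ch.
  set (D := fun x => / 2 * (rw p x * (al * h x + Y x - al * q * g x) ^ 2)
                   + / 2 * (rw p x * (al * (h x + q * g x) - Z x) ^ 2)).
  assert (CD : Ct D) by (unfold D; ctac).
  assert (SA : RInt (fun x => rw p x * (al * h x + Y x) ^ 2) 0 (pL p) =
     / 2 * Nm p Y - / 2 * Nm p Z + al * ip p h Y + al * q * ip p g Y + al * ip p h Z
     + al * q * ip p g Z - al ^ 2 * q ^ 2 * Nm p g + RInt D 0 (pL p)).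
  { rewrite (RInt_extR _ (lcomb ((/2, fun x => rw p x * (Y x * Y x)) :: (- / 2, fun x => rw p x * (Z x * Z x))
        :: (al, fun x => rw p x * (h x * Y x)) :: (al * q, fun x => rw p x * (g x * Y x))
        :: (al, fun x => rw p x * (h x * Z x)) :: (al * q, fun x => rw p x * (g x * Z x))
        :: (- (al ^ 2 * q ^ 2), fun x => rw p x * (g x * g x)) :: (1, D) :: nil))).
    rewrite RInt_lc. simpl. unfold Nm, ip. ring.
    exs Hp.
    intro x. simpl. unfold D. match goal with |- ?a = ?b => change (@eq R a b) end; field. }
  assert (D0 : 0 <= RInt D 0 (pL p)).
  { apply RInt_ge0. lra. apply exR. lra. unfold D; ctac.
    intros x _. unfold D. pose proof (rw_pos p x).
    assert (0 <= rw p x * (al * h x + Y x - al * q * g x) ^ 2) by (apply Rmult_le_pos; [lra|apply pow2_ge_0]).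
    assert (0 <= rw p x * (al * (h x + q * g x) - Z x) ^ 2) by (apply Rmult_le_pos; [lra|apply pow2_ge_0]).
    lra. }
  assert (B1 : ip p h Z = ip p g Hn').
  { rewrite ip_sym. unfold Z. apply ipE; auto. }
  assert (B2 : ip p g Z = ip p g Y).
  { rewrite ip_sym. unfold Z. apply ipE; auto. }
  assert (SC : RInt (fun x => rw p x * (h x * Y x + 2 * q * (g x * Y x) + g x * Hn' x)) 0 (pL p)
               = ip p h Y + 2 * q * ip p g Y + ip p g Hn').
  { rewrite (RInt_extR _ (lcomb ((1, fun x => rw p x * (h x * Y x)) :: (2 * q, fun x => rw p x * (g x * Y x))
        :: (1, fun x => rw p x * (g x * Hn' x)) :: nil))).
    rewrite RInt_lc. simpl. unfold ip. ring.
    exs Hp.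
    intro x. simpl. ring. }
  change (Derive_n g n) with Y. change (Derive_n h n) with Hn'.
  rewrite SA, SC, B1, B2.
  pose proof (P1 p n g Hp Hg Hl ltac:(lia)) as HP1. fold Y Z in HP1.
  pose proof (sum_bound p g n Hp Hg ltac:(lia)) as HS.
  set (S := sum_f_R0 (fun m => pl p ^ (2 * n - 2 * m - 1) * Nm p (Derive_n g m)) (n - 1)) in *.
  set (N1 := Nm p (Derive_n g (n - 1))) in *.
  assert (HK : 0 < K1 p ^ n).
  { apply pow_lt. unfold K1. assert (0 < / (4 * (px0 p - pL p) ^ 2)).
    apply Rinv_0_lt_compat. apply Rmult_lt_0_compat. lra. apply pow_lt. lra. lra. }
  assert (HnR : 0 < INR n) by (apply lt_0_INR; lia).
  assert (HA1 : A' * (INR n * K1 p ^ n) = 1) by (rewrite HA; field; lra).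
  assert (HA0 : 0 < A') by (rewrite HA; apply Rinv_0_lt_compat; apply Rmult_lt_0_compat; lra).
  assert (H3 : A' * S <= pl p * N1).
  { replace (pl p * N1) with (A' * (INR n * (pl p * K1 p ^ n * N1))).
    apply Rmult_le_compat_l; lra.
    transitivity ((A' * (INR n * K1 p ^ n)) * (pl p * N1)). ring. rewrite HA1. ring. }
  assert (H4 : al ^ 2 * q ^ 2 * Nm p g <= A' * S).
  { assert (T0 : pl p ^ (2 * n - 1) * Nm p g <= S).
    { unfold S. pose proof (sum_term_le (fun m => pl p ^ (2 * n - 2 * m - 1) * Nm p (Derive_n g m)) (n - 1)) as T.
      cbv beta in T. replace (2 * n - 2 * 0 - 1)%nat with (2 * n - 1)%nat in T by lia.
      change (Nm p (Derive_n g 0)) with (Nm p g) in T. apply T.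
      intros m _. apply Rmult_le_pos. apply pow_le; lra. apply ip_nonneg; auto.
      apply (Cls_ct p _ (Cls_Dn p g m Hg)). }
    assert (Ng : 0 <= Nm p g) by (apply ip_nonneg; auto).
    apply Rle_trans with (A' * pl p ^ (2 * n - 1) * Nm p g).
    apply Rmult_le_compat_r; auto.
    rewrite Rmult_assoc. apply Rmult_le_compat_l; lra. }
  assert (H5 : 0 <= pl p) by lra.
  nra.
Qed.


Definition C2 (k : R -> R -> R) := forall t x, continuity_2d_pt k t x.

Lemma C2_plus f g : C2 f -> C2 g -> C2 (fun u v => f u v + g u v).
Proof. intros Hf Hg t x. apply continuity_2d_pt_plus; auto. Qed.
Lemma C2_minus f g : C2 f -> C2 g -> C2 (fun u v => f u v - g u v).
Proof. intros Hf Hg t x. apply continuity_2d_pt_minus; auto. Qed.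
Lemma C2_mult f g : C2 f -> C2 g -> C2 (fun u v => f u v * g u v).
Proof. intros Hf Hg t x. apply continuity_2d_pt_mult; auto. Qed.
Lemma C2_opp f : C2 f -> C2 (fun u v => - f u v).
Proof. intros Hf t x. apply continuity_2d_pt_opp; auto. Qed.
Lemma C2_const c : C2 (fun _ _ => c).
Proof. intros t x. apply continuity_2d_pt_const. Qed.
Lemma C2_id1 : C2 (fun u _ => u).
Proof. intros t x. apply continuity_2d_pt_id1. Qed.
Lemma C2_id2 : C2 (fun _ v => v).
Proof. intros t x. apply continuity_2d_pt_id2. Qed.
Lemma C2_pow f n : C2 f -> C2 (fun u v => f u v ^ n).
Proof. intros Hf. induction n; simpl. apply C2_const. apply C2_mult; auto. Qed.
Lemma C2_exp f : C2 f -> C2 (fun u v => exp (f u v)).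
Proof. intros Hf t x. apply continuity_1d_2d_pt_comp; auto.
  apply continuity_pt_filterlim. apply (ex_derive_continuous (K:=R_AbsRing) (V:=R_NormedModule) exp).
  eexists; apply is_derive_exp. Qed.
Lemma C2_ext f g : (forall u v, f u v = g u v) -> C2 f -> C2 g.
Proof. intros H Hf t x. apply (continuity_2d_pt_ext f g); auto. Qed.

Ltac c2tac := lazymatch goal with
 | |- C2 (fun _ _ => ?c) => apply C2_const
 | |- C2 (fun u _ => u) => apply C2_id1
 | |- C2 (fun _ v => v) => apply C2_id2
 | |- C2 (fun u v => @?f u v + @?g u v) => apply (C2_plus f g); c2tac
 | |- C2 (fun u v => @?f u v - @?g u v) => apply (C2_minus f g); c2tac
 | |- C2 (fun u v => @?f u v * @?g u v) => apply (C2_mult f g); c2tac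
 | |- C2 (fun u v => - @?f u v) => apply (C2_opp f); c2tac
 | |- C2 (fun u v => @?f u v ^ ?n) => apply (C2_pow f n); c2tac
 | |- C2 (fun u v => exp (@?f u v)) => apply (C2_exp f); c2tac
 | |- C2 (fun u v => psi ?a ?b ?c u v) => unfold psi; c2tac
 | |- _ => try assumption
 end.

Lemma C2_slice k t : C2 k -> Ct (fun x => k t x).
Proof.
  intros H x. apply continuity_pt_filterlim. intros eps Heps.
  destruct (H t x (mkposreal eps Heps)) as [d Hd]. exists d. split. apply cond_pos.
  intros y [_ Hy]. simpl. unfold R_dist. apply Hd. rewrite Rminus_eq_0, Rabs_R0. apply cond_pos.
  exact Hy.
Qed.

Lemma C2_swap k : C2 k -> C2 (fun x s => k s x).
Proof. intros H x s eps. destruct (H s x eps) as [d Hd]. exists d. intros u v Hu Hv. apply Hd; auto. Qed.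

Lemma cont_param (k : R -> R -> R) a b : a <= b -> C2 k -> Ct (fun s => RInt (fun x => k s x) a b).
Proof.
  intros Hab Hk t. apply continuity_pt_filterlim. intros eps Heps.
  assert (He : 0 < eps / (b - a + 1)) by (apply Rdiv_lt_0_compat; lra).
  destruct (uniform_continuity_2d_1d (fun x s => k s x) a b t) with (eps := mkposreal _ He) as [d Hd].
  { intros x _. apply C2_swap; auto. }
  exists d. split. apply cond_pos. intros s [_ Hs]. simpl in Hs. unfold R_dist in Hs. simpl. unfold R_dist.
  rewrite <- RInt_minusR. 2,3: apply exR; auto; apply C2_slice; auto.
  apply Rle_lt_trans with ((b - a) * (eps / (b - a + 1))).
  apply abs_RInt_le_const; auto. apply exR; auto. apply Ct_minus; apply C2_slice; auto.
  intros u Hu. left. pose proof (cond_pos d) as Hd0. pose proof Hs as Hs'. apply Rabs_def2 in Hs'.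
  apply (Hd u t u s); [exact Hu | lra | exact Hu | lra | rewrite Rminus_eq_0, Rabs_R0; lra].
  apply Rlt_le_trans with ((b - a + 1) * (eps / (b - a + 1))).
  apply Rmult_lt_compat_r; auto; lra. right; field; lra.
Qed.

Lemma pder_app l1 l2 f : pder (l1 ++ l2) f = pder l1 (pder l2 f).
Proof. induction l1 as [|b l1 IH]; simpl; auto. rewrite IH. reflexivity. Qed.

Lemma smooth2_pder l f : smooth2 f -> smooth2 (pder l f).
Proof. intros H l' t x. rewrite <- pder_app. apply H. Qed.

Lemma C2_pder l f : smooth2 f -> C2 (pder l f).
Proof. intros H t x. apply (H l t x). Qed.

Lemma locally_2d_all (P : R -> R -> Prop) x y : (forall u v, P u v) -> locally_2d P x y.
Proof. intros H. exists (mkposreal 1 Rlt_0_1). intros; apply H. Qed.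

Lemma pder_swap l f : smooth2 f -> pder (true :: false :: l) f = pder (false :: true :: l) f.
Proof.
  intros H. apply functional_extensionality; intro t. apply functional_extensionality; intro x.
  simpl. set (G := pder l f).
  assert (HG : smooth2 G) by (apply smooth2_pder; auto).
  apply (Schwarz G t x).
  - apply locally_2d_all. intros u v. split; [apply (HG nil u v)|]. split; [apply (HG nil u v)|].
    split; [apply (HG (false :: nil) u v)| apply (HG (true :: nil) u v)].
  - apply (HG (true :: false :: nil) t x).
  - apply (HG (false :: true :: nil) t x).
Qed.

Lemma pder_comm k f : smooth2 f -> pder (true :: repeat false k) f = pder (repeat false k ++ true :: nil) f.
Proof.
  intros H. induction k.
  - reflexivity.
  - change (repeat false (S k)) with (false :: repeat false k). rewrite pder_swap; auto.
    change ((false :: repeat false k) ++ true :: nil) with (false :: (repeat false k ++ true :: nil)).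
    simpl. rewrite <- IHk. reflexivity.
Qed.

Lemma Dn_pder k l f t : Derive_n (fun y => pder l f t y) k = fun x => pder (repeat false k ++ l) f t x.
Proof.
  induction k.
  - reflexivity.
  - apply functional_extensionality; intro x. change (Derive_n (fun y => pder l f t y) (S k) x)
      with (Derive (Derive_n (fun y => pder l f t y) k) x). rewrite IHk. reflexivity.
Qed.

Lemma Cls_slice p l v t : smooth2 v -> (forall s x, ~ (pc p <= x <= pd p) -> pder l v s x = 0) ->
  Cls p (fun y => pder l v t y).
Proof.
  intros H Hs. split.
  - intros k x. rewrite Dn_pder. apply (H (repeat false k ++ l) t x).
  - intros x Hx. apply Hs; auto.
Qed.

Lemma supp_dt p v : (forall s x, ~ (pc p <= x <= pd p) -> v s x = 0) ->
  forall s x, ~ (pc p <= x <= pd p) -> pder (true :: nil) v s x = 0.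
Proof.
  intros Hs s x Hx. simpl. rewrite (Derive_ext _ (fun _ => 0)). apply Derive_const.
  intro u. apply Hs; auto.
Qed.


Definition Vn v n := pder (repeat false n) v.

Definition Dfe lam x0 t0 beta v n s x :=
  exp (2 * lam * psi x0 t0 beta s x) *
  (2 * (lam * (-2 * beta * (s - t0))) * (v s x * Vn v n s x)
   + (pder (true :: nil) v s x * Vn v n s x + v s x * pder (true :: repeat false n) v s x)).

Lemma locally_all (P : R -> Prop) x : (forall y, P y) -> locally x P.
Proof. intros H. exists (mkposreal 1 Rlt_0_1). intros; apply H. Qed.

Lemma exp_t_deriv lam x0 t0 beta x s :
  is_derive (fun u => exp (2 * lam * psi x0 t0 beta u x)) s
    (exp (2 * lam * psi x0 t0 beta s x) * (2 * (lam * (-2 * beta * (s - t0))))).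
Proof. unfold psi. auto_derive. auto.
  match goal with |- _ * exp ?A = exp ?B * _ => replace A with B by ring end. ring. Qed.

Lemma f_deriv lam x0 t0 beta v n s x : smooth2 v ->
  is_derive (fun u => exp (2 * lam * psi x0 t0 beta u x) * (v u x * Vn v n u x)) s
    (Dfe lam x0 t0 beta v n s x).
Proof.
  intros H. eapply is_derive_eqv.
  2:{ apply is_derive_multR. apply exp_t_deriv. apply is_derive_multR.
      apply (Derive_cor (fun u => pder nil v u x)). apply (H nil s x).
      apply (Derive_cor (fun u => pder (repeat false n) v u x)). apply (H (repeat false n) s x). }
  unfold Dfe, Vn. simpl. ring.
Qed.

Lemma C2_Dfe lam x0 t0 beta v n : smooth2 v -> C2 (Dfe lam x0 t0 beta v n).
Proof.
  intros H. unfold Dfe, Vn.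
  assert (C1 : C2 v) by apply (C2_pder nil v H).
  assert (C3 : C2 (pder (repeat false n) v)) by apply (C2_pder _ v H).
  assert (C4 : C2 (pder (true :: nil) v)) by apply (C2_pder _ v H).
  assert (C5 : C2 (pder (true :: repeat false n) v)) by apply (C2_pder _ v H).
  c2tac.
Qed.

Lemma RInt_zero (a b : R) : RInt (fun _ => 0) a b = 0.
Proof. rewrite RInt_const. unfold scal; simpl; unfold mult; simpl; ring. Qed.

Lemma J_zero lam x0 t0 beta v n L T : 0 <= L -> 0 <= T -> smooth2 v ->
  (forall x, v 0 x = 0) -> (forall x, v T x = 0) ->
  RInt (fun t => RInt (fun x => Dfe lam x0 t0 beta v n t x) 0 L) 0 T = 0.
Proof.
  intros HL HT Hs H0 HT0.
  set (f := fun s x => exp (2 * lam * psi x0 t0 beta s x) * (v s x * Vn v n s x)).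
  assert (Cf : C2 f).
  { unfold f, Vn. assert (C1 : C2 v) by apply (C2_pder nil v Hs).
    assert (C3 : C2 (pder (repeat false n) v)) by apply (C2_pder _ v Hs). c2tac. }
  assert (Df : forall s x, Derive (fun u => f u x) s = Dfe lam x0 t0 beta v n s x).
  { intros s x. apply is_derive_unique. apply f_deriv; auto. }
  apply (FTC0 (fun t => RInt (fun x => f t x) 0 L)); auto.
  - intro t. eapply is_derive_eqv. 2: apply (is_derive_RInt_param f 0 L t).
    + apply RInt_extR. intro x. apply Df.
    + apply locally_all. intros y x _. eexists. apply f_deriv; auto.
    + intros x _. apply (continuity_2d_pt_ext (Dfe lam x0 t0 beta v n)).
      intros; rewrite Df; reflexivity. apply C2_Dfe; auto.
    + apply locally_all. intro y. apply exR; auto. apply C2_slice; auto.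
  - apply cont_param; auto. apply C2_Dfe; auto.
  - rewrite (RInt_extR _ (fun _ => 0)). apply RInt_zero. intro x. unfold f. rewrite H0. ring.
  - rewrite (RInt_extR _ (fun _ => 0)). apply RInt_zero. intro x. unfold f. rewrite HT0. ring.
Qed.

Lemma per_t_2d lam x0 t0 beta v n L c d al A' t :
  smooth2 v -> (forall s x, ~ (c <= x <= d) -> v s x = 0) ->
  0 < c -> c < d -> d < L -> L < x0 -> 0 < lam -> (2 <= n)%nat ->
  INR n * (4 * lam) <= 8 * lam ^ 2 * (x0 - L) ^ 2 ->
  A' = / (INR n * (/ (4 * (x0 - L) ^ 2) + 1) ^ n) ->
  al ^ 2 * (lam * (-2 * beta * (t - t0))) ^ 2 <= A' * lam ^ (2 * n - 1) ->
  A' * sum_f_R0 (fun m => lam ^ (2 * n - 2 * m - 1) *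
        RInt (fun x => exp (2 * lam * psi x0 t0 beta t x) * (dxn m v t x * dxn m v t x)) 0 L) (n - 1)
  + al * RInt (fun x => Dfe lam x0 t0 beta v n t x) 0 L
  <= RInt (fun x => exp (2 * lam * psi x0 t0 beta t x) * (al * dt v t x + dxn n v t x) ^ 2) 0 L.
Proof.
  intros Hs Hsupp Hc Hcd HdL HLx Hl Hn Hn4 HA Hq.
  set (p := mkP lam x0 t0 beta t L c d).
  assert (Hp : good p) by (unfold good, p; simpl; lra).
  assert (Hg : Cls p (fun y => pder nil v t y)).
  { apply Cls_slice; auto. }
  assert (Hh : Cls p (fun y => pder (true :: nil) v t y)).
  { apply Cls_slice; auto. apply supp_dt. exact Hsupp. }
  set (q := lam * (-2 * beta * (t - t0))).
  pose proof (per_t p n (fun y => pder nil v t y) (fun y => pder (true :: nil) v t y) al q A' Hp Hg Hh Hn Hn4 HA Hq) as HH.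
  assert (HJ : RInt (fun x => rw p x * (pder (true :: nil) v t x * Derive_n (fun y => pder nil v t y) n x
         + 2 * q * (pder nil v t x * Derive_n (fun y => pder nil v t y) n x)
         + pder nil v t x * Derive_n (fun y => pder (true :: nil) v t y) n x)) 0 (pL p)
         = RInt (fun x => Dfe lam x0 t0 beta v n t x) 0 L).
  { apply RInt_extR. intro x. rewrite !Dn_pder. rewrite app_nil_r. rewrite <- pder_comm; auto.
    unfold Dfe, Vn, rw, q. simpl. ring. }
  cbv beta in HH. rewrite HJ in HH. exact HH.
Qed.


Lemma Ct_sum (f : nat -> R -> R) N : (forall m, Ct (f m)) -> Ct (fun t => sum_f_R0 (fun m => f m t) N).
Proof. intros H. induction N; simpl. apply H. apply Ct_plus; auto. Qed.

Lemma RInt_sum (f : nat -> R -> R) N a b : a <= b -> (forall m, Ct (f m)) ->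
  RInt (fun t => sum_f_R0 (fun m => f m t) N) a b = sum_f_R0 (fun m => RInt (f m) a b) N.
Proof.
  intros Hab H. induction N; simpl.
  - reflexivity.
  - rewrite RInt_plusR. rewrite IHN. reflexivity.
    apply exR; auto. apply Ct_sum; auto. apply exR; auto.
Qed.

Lemma dxn_pder m v t x : dxn m v t x = pder (repeat false m) v t x.
Proof. unfold dxn. change (Derive_n (fun y => v t y) m x) with (Derive_n (fun y => pder nil v t y) m x).
  rewrite Dn_pder. rewrite app_nil_r. reflexivity. Qed.

Lemma C2_dxn m v : smooth2 v -> C2 (fun t x => dxn m v t x).
Proof. intros H. apply (C2_ext (pder (repeat false m) v)). intros; rewrite dxn_pder; auto.
  apply C2_pder; auto. Qed.

Theorem mainTheorem2 (T L alpha : R) (n : nat) (x0 t0 beta : R)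
  (HT : 0 < T) (HL : 0 < L) (Halpha : alpha <> 0) (Hn : (2 <= n)%nat)
  (Hx0 : x0 > L) (Ht0 : 0 < t0 < T) (Hbeta : 0 < beta) :
  exists lambda0 C : R, 0 < lambda0 /\ 0 < C /\
    forall (lambda : R) (v : R -> R -> R),
      lambda > lambda0 -> C0inf_rect T L v ->
      sum_f_R0 (fun m =>
          int2 T L (fun t x =>
            lambda ^ (2 * n - 2 * m - 1) *
            exp (2 * lambda * psi x0 t0 beta t x) * (dxn m v t x) ^ 2))
        (n - 1)
      <= C * int2 T L (fun t x =>
            exp (2 * lambda * psi x0 t0 beta t x) *
            (alpha * dt v t x + dxn n v t x) ^ 2).
Proof.
  set (K := (/ (4 * (x0 - L) ^ 2) + 1) ^ n).
  assert (Hd2 : 0 < (x0 - L) ^ 2) by (apply pow_lt; lra).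
  assert (HK : 0 < K).
  { unfold K. apply pow_lt. assert (0 < / (4 * (x0 - L) ^ 2)) by (apply Rinv_0_lt_compat; lra). lra. }
  assert (HnR : 0 < INR n) by (apply lt_0_INR; lia).
  set (A' := / (INR n * K)).
  assert (HA : 0 < A') by (unfold A'; apply Rinv_0_lt_compat; apply Rmult_lt_0_compat; lra).
  set (B := 4 * alpha ^ 2 * beta ^ 2 * T ^ 2).
  assert (HB : 0 <= B) by (unfold B; apply Rmult_le_pos; [apply Rmult_le_pos; [apply Rmult_le_pos; [lra|apply pow2_ge_0]|apply pow2_ge_0]|apply pow2_ge_0]).
  exists (INR n / (2 * (x0 - L) ^ 2) + B / A' + 1), (INR n * K).
  assert (H1 : 0 <= INR n / (2 * (x0 - L) ^ 2)) by (apply Rdiv_le_0_compat; lra).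
  assert (H2 : 0 <= B / A') by (apply Rdiv_le_0_compat; lra).
  split. lra. split. apply Rmult_lt_0_compat; lra.
  intros lam v Hlam [Hsm [a [b [c [d (Ha & Hab & HbT & Hc & Hcd & HdL & Hsupp)]]]]].
  assert (Hs : forall s x, ~ (c <= x <= d) -> v s x = 0).
  { intros s x Hx. apply Hsupp. tauto. }
  assert (Hv0 : forall x, v 0 x = 0). { intros x. apply Hsupp. lra. }
  assert (HvT : forall x, v T x = 0). { intros x. apply Hsupp. lra. }
  assert (Hl1 : 1 <= lam) by lra.
  assert (Hn4 : INR n * (4 * lam) <= 8 * lam ^ 2 * (x0 - L) ^ 2).
  { assert (E1 : INR n / (2 * (x0 - L) ^ 2) * (2 * (x0 - L) ^ 2) = INR n) by (field; lra).
    assert (INR n / (2 * (x0 - L) ^ 2) <= lam) by lra.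
    assert (INR n <= lam * (2 * (x0 - L) ^ 2)).
    { rewrite <- E1. apply Rmult_le_compat_r; lra. }
    nra. }
  assert (Hq : forall t, 0 <= t <= T ->
            alpha ^ 2 * (lam * (-2 * beta * (t - t0))) ^ 2 <= A' * lam ^ (2 * n - 1)).
  { intros t Ht.
    assert (Ht2 : (t - t0) ^ 2 <= T ^ 2) by nra.
    assert (E2 : B / A' * A' = B) by (field; lra).
    assert (HAl : B <= A' * lam). { rewrite <- E2. rewrite Rmult_comm. apply Rmult_le_compat_l; lra. }
    assert (Hp3 : lam ^ 3 <= lam ^ (2 * n - 1)) by (apply Rle_pow; [lra| lia]).
    assert (E3 : alpha ^ 2 * (lam * (-2 * beta * (t - t0))) ^ 2
                 = lam ^ 2 * (4 * alpha ^ 2 * beta ^ 2 * (t - t0) ^ 2)) by ring.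
    rewrite E3.
    assert (4 * alpha ^ 2 * beta ^ 2 * (t - t0) ^ 2 <= B).
    { unfold B. apply Rmult_le_compat_l. apply Rmult_le_pos; [apply Rmult_le_pos; [lra|apply pow2_ge_0]|apply pow2_ge_0]. auto. }
    assert (0 <= lam ^ 2) by apply pow2_ge_0.
    apply Rle_trans with (lam ^ 2 * B). apply Rmult_le_compat_l; auto.
    apply Rle_trans with (A' * lam ^ 3). replace (A' * lam ^ 3) with (lam ^ 2 * (A' * lam)) by ring.
    apply Rmult_le_compat_l; auto. apply Rmult_le_compat_l; lra. }
  assert (Hper : forall t, 0 <= t <= T ->
    A' * sum_f_R0 (fun m => lam ^ (2 * n - 2 * m - 1) *
        RInt (fun x => exp (2 * lam * psi x0 t0 beta t x) * (dxn m v t x * dxn m v t x)) 0 L) (n - 1)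
    + alpha * RInt (fun x => Dfe lam x0 t0 beta v n t x) 0 L
    <= RInt (fun x => exp (2 * lam * psi x0 t0 beta t x) * (alpha * dt v t x + dxn n v t x) ^ 2) 0 L).
  { intros t Ht. apply (per_t_2d lam x0 t0 beta v n L c d alpha A' t); auto; try lra.
  }
  assert (Cdt : C2 (fun t x => dt v t x)) by exact (C2_pder (true :: nil) v Hsm).
  assert (Cdn : forall m, C2 (fun t x => dxn m v t x)) by (intro m; apply C2_dxn; auto).
  assert (CSm : forall m, Ct (fun t => lam ^ (2 * n - 2 * m - 1) *
        RInt (fun x => exp (2 * lam * psi x0 t0 beta t x) * (dxn m v t x * dxn m v t x)) 0 L)).
  { intro m. apply Ct_mult. apply Ct_const.
    apply (cont_param (fun t x => exp (2 * lam * psi x0 t0 beta t x) * (dxn m v t x * dxn m v t x))).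
    lra. pose proof (Cdn m). c2tac. }
  assert (CS : Ct (fun t => sum_f_R0 (fun m => lam ^ (2 * n - 2 * m - 1) *
        RInt (fun x => exp (2 * lam * psi x0 t0 beta t x) * (dxn m v t x * dxn m v t x)) 0 L) (n - 1))).
  { apply (Ct_sum (fun m t => lam ^ (2 * n - 2 * m - 1) *
        RInt (fun x => exp (2 * lam * psi x0 t0 beta t x) * (dxn m v t x * dxn m v t x)) 0 L)). auto. }
  assert (CJ : Ct (fun t => RInt (fun x => Dfe lam x0 t0 beta v n t x) 0 L)).
  { apply (cont_param (Dfe lam x0 t0 beta v n)). lra. apply C2_Dfe; auto. }
  assert (CR : Ct (fun t => RInt (fun x => exp (2 * lam * psi x0 t0 beta t x) * (alpha * dt v t x + dxn n v t x) ^ 2) 0 L)).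
  { apply (cont_param (fun t x => exp (2 * lam * psi x0 t0 beta t x) * (alpha * dt v t x + dxn n v t x) ^ 2)).
    lra. pose proof (Cdn n). c2tac. }
  set (Sf := fun t => sum_f_R0 (fun m => lam ^ (2 * n - 2 * m - 1) *
        RInt (fun x => exp (2 * lam * psi x0 t0 beta t x) * (dxn m v t x * dxn m v t x)) 0 L) (n - 1)) in *.
  set (Jf := fun t => RInt (fun x => Dfe lam x0 t0 beta v n t x) 0 L) in *.
  set (Rf := fun t => RInt (fun x => exp (2 * lam * psi x0 t0 beta t x) * (alpha * dt v t x + dxn n v t x) ^ 2) 0 L) in *.
  assert (Hint : lcombI ((A', Sf) :: (alpha, Jf) :: nil) 0 T <= RInt Rf 0 T).
  { rewrite <- RInt_lc. apply RInt_leR. lra.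
    apply ex_lc. repeat apply List.Forall_cons; try apply List.Forall_nil; simpl; apply exR; auto; lra.
    apply exR; auto; lra.
    intros t Ht. cbn [lcomb]. specialize (Hper t Ht). unfold Sf, Jf, Rf. lra.
    repeat apply List.Forall_cons; try apply List.Forall_nil; simpl; apply exR; auto; lra. }
  cbn [lcombI] in Hint.
  replace (RInt Jf 0 T) with 0 in Hint.
  2:{ symmetry. unfold Jf. apply J_zero; auto; lra. }
  unfold Sf in Hint.
  rewrite RInt_sum in Hint; try lra; auto.
  assert (Eq : sum_f_R0 (fun m => int2 T L (fun t x => lam ^ (2 * n - 2 * m - 1) *
            exp (2 * lam * psi x0 t0 beta t x) * dxn m v t x ^ 2)) (n - 1)
     = sum_f_R0 (fun m => RInt (fun t => lam ^ (2 * n - 2 * m - 1) *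
        RInt (fun x => exp (2 * lam * psi x0 t0 beta t x) * (dxn m v t x * dxn m v t x)) 0 L) 0 T) (n - 1)).
  { apply sum_eq. intros m _. unfold int2. apply RInt_extR. intro t.
    rewrite <- RInt_scalR. apply RInt_extR. intro x. ring.
    apply exR. lra. pose proof (Cdn m).
    apply (C2_slice (fun t x => exp (2 * lam * psi x0 t0 beta t x) * (dxn m v t x * dxn m v t x))). c2tac. }
  rewrite Eq. unfold int2.
  set (X := sum_f_R0 _ (n - 1)) in *.
  set (Y := RInt _ 0 T) in Hint. change (RInt _ 0 T) with Y.
  assert (E4 : INR n * K * A' = 1) by (unfold A'; field; lra).
  replace X with (INR n * K * (A' * X)) by (rewrite <- Rmult_assoc, E4; ring).
  apply Rmult_le_compat_l. left; apply Rmult_lt_0_compat; lra. rewrite Rmult_0_r, !Rplus_0_r in Hint. exact Hint.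
Qed.
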